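(* Let $k$ be a field of characteristic $p>0$ and $A$ a $k$-vector space of finite dimension $n\ge1$. For every $r\ge0$, $S_{\le r}A\neq\bigoplus_{0\le i\le r}S^iA$.
   Context: $SA=\bigoplus_{m\ge0}S^mA$ is the symmetric algebra of $A$ ($S^0A=k$, $S^mA$ the $m$-th symmetric power, with pure symmetric tensors $a_1\otimes_s\dots\otimes_s a_m$). The linear map $\partial\colon SA\to SA\otimes A$ is given by $\partial(\lambda)=0$ for $\lambda\in S^0A$ and $\partial(a_1\otimes_s\dots\otimes_s a_m)=\sum_{i=1}^m(a_1\otimes_s\dots\otimes_s a_{i-1}\otimes_s a_{i+1}\otimes_s\dots\otimes_s a_m)\otimes a_i$. Iterates: $\partial^0=1_{SA}$ and $\partial^{r+1}:=\partial;(\partial^r\otimes 1_A)\colon SA\to SA\otimes A^{\otimes(r+1)}$. Define $S_{\le r}A:=\ker(\partial^{r+1})\subseteq SA$. *)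

(* Defs.v *)
From HB Require Import structures.
From mathcomp Require Import all_boot all_order all_algebra.
From mathcomp Require Import mpoly.
Set Implicit Arguments. Unset Strict Implicit. Unset Printing Implicit Defensive.
Import GRing.Theory.
Local Open Scope ring_scope.

(* Model: A = k^n with standard basis e_0..e_{n-1}.  Then
   SA = k[X_0,...,X_{n-1}] = {mpoly k[n]}, where e_i corresponds to X_i and the
   symmetric product is polynomial multiplication; S^m A = homogeneous
   polynomials of total degree m.
   A^{(x) s} is identified with k^{n^s} (basis e_{i_1} (x) ... (x) e_{i_s}),
   so SA (x) A^{(x) s} = functions  s.-tuple 'I_n -> SA  (coefficient of each
   basis tensor). *)

Definition Spow (k : fieldType) (n m : nat) (f : {mpoly k[n]}) : Prop :=
  f \is ishomog1 m (@mdeg n).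

(* partial : SA -> SA (x) A.  On a pure symmetric tensor
   a_1 ... a_m  it gives  sum_i (prod_{j<>i} a_j) (x) a_i; in coordinates the
   e_i-component is the formal partial derivative d/dX_i. *)
Definition partial (k : fieldType) (n : nat) (f : {mpoly k[n]})
  : 'I_n -> {mpoly k[n]} := fun i => mderiv i f.

(* partial^{r} : SA -> SA (x) A^{(x) r}, with partial^0 = id and
   partial^{r+1} = partial ; (partial^r (x) 1_A).  The component at
   e_{i_1} (x) ... (x) e_{i_{r+1}} of partial^{r+1} f is
   (partial^r (d_{i_{r+1}} f))_{(i_1..i_r)}, i.e. the iterated derivative
   d_{i_1} ... d_{i_{r+1}} f (innermost = last index). *)
Definition partial_pow (k : fieldType) (n : nat) (f : {mpoly k[n]})
  (t : seq 'I_n) : {mpoly k[n]} :=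
  foldr (fun i g => mderiv i g) f t.

Definition S_le (k : fieldType) (n r : nat) (f : {mpoly k[n]}) : Prop :=
  forall t : r.+1.-tuple 'I_n, partial_pow f t = 0.

Definition in_Sum_le (k : fieldType) (n r : nat) (f : {mpoly k[n]}) : Prop :=
  exists g : 'I_r.+1 -> {mpoly k[n]},
    (forall i : 'I_r.+1, Spow (val i) (g i)) /\ f = \sum_(i < r.+1) g i.

(* Main.v *)
Require Import Defs.
From HB Require Import structures.
From mathcomp Require Import all_boot all_order all_algebra.
From mathcomp Require Import mpoly.
Import GRing.Theory.
Local Open Scope ring_scope.

Theorem proposition7p7 (k : fieldType) (p : nat) (hp : p \in [pchar k])
  (n : nat) (hn : (0 < n)%N) (r : nat) :
  ~ (forall f : {mpoly k[n]}, S_le r f <-> in_Sum_le r f).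
Proof.
move=> H.
pose i0 : 'I_n := Ordinal hn.
pose N := (p * r.+1)%N.
pose m : 'X_{1..n} := (U_(i0) *+ N)%MM.
pose f : {mpoly k[n]} := 'X_[m].
have hd : forall j, mderiv j f = 0.
  move=> j; rewrite /f mderivX mulmnE mnm1E natrM.
  by rewrite /N natrM (pcharf0 hp) !mul0r mulr0 scale0r.
have hS : S_le r f.
  have gen : forall s : seq 'I_n, s != [::] -> partial_pow f s = 0.
    elim=> [|i s IH] //= _.
    case: s IH => [|j s] IH /=; first by rewrite hd.
    by rewrite /partial_pow /= in IH; rewrite IH // mderiv0.
  move=> t; apply: gen; case: t => s /= /eqP; by case: s.
have [g [hg hf]] := (H f).1 hS.
have : f@_m = 1 by rewrite /f mcoeffX eqxx.
rewrite hf raddf_sum /= big1; first by move/esym/eqP; rewrite oner_eq0.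
move=> i _.
apply: (dhomog_nemf_coeff (hg i)) => /=.
idtac.
rewrite /m mdegMn mdeg1 mul1n /N.
have p2 : (1 < p)%N by apply: prime_gt1; apply: (pcharf_prime hp).
apply/eqP => E; have hi := ltn_ord i; rewrite -E in hi.
have := leq_pmull r.+1 (ltnW p2); rewrite leqNgt; by rewrite (leq_trans _ hi).
Qed.
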